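(* Let $n\in\mathbb{N}$, $\beta\in\mathbb{R}$, $\epsilon\in\mathbb{R}^n$, $X\in\mathbb{R}^n$, $G_n\subseteq\{1,\dots,n\}$ and $o\in\mathbb{R}^n$ with $o_i=0$ for $i\notin G_n$; set $Y:=X\beta+\epsilon+o$. Let $\mathcal{U}_n\subseteq\mathcal{P}(\{1,\dots,n\})$ with $\emptyset\notin\mathcal{U}_n$ and $\mathrm{Inl}(\mathcal{U}_n):=\{S\in\mathcal{U}_n:S\cap G_n=\emptyset\}\ne\emptyset$. For $S\in\mathcal{U}_n$ and $U_n\in\mathrm{Inl}(\mathcal{U}_n)$ define $\eta_1(S):=\frac{|X_S^\top\epsilon_S|}{\|X_S\|_2^2}$ and $\eta_2(S,U_n)$ through \[ \eta_2^2(S,U_n):=\frac{1}{\|X_{S\setminus G_n}\|_2^2}\Big(\frac{|S|}{|U_n|}\|\epsilon_{U_n}\|_2^2-\|\epsilon_S\|_2^2-2\epsilon_S^\top o_S+\frac{(X_S^\top\epsilon_S)^2}{\|X_S\|_2^2}+2\frac{|X_S^\top\epsilon_S|\,|X_S^\top o_S|}{\|X_S\|_2^2}-\frac{|S|(X_{U_n}^\top\epsilon_{U_n})^2}{|U_n|\|X_{U_n}\|_2^2}\Big). \] Then \[ |\hat\beta^n_{\mathrm{BFS}}(\mathcal{U}_n)-\beta|\le\max_{S\in\mathcal{U}_n}\min_{U_n\in\mathrm{Inl}(\mathcal{U}_n)}\big(\eta_1(S)+\eta_2(S,U_n)\big). \]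
   Context: $X_S,Y_S,\epsilon_S,o_S$ denote subvectors with indices in $S$. $\hat\beta^S_{\mathrm{OLS}}(X,Y):=(X_S^\top X_S)^{+}X_S^\top Y_S$ ($^{+}$: Moore–Penrose inverse). BFS with collection $\mathcal{U}_n$: enumerate $S\in\mathcal{U}_n$ in a fixed order, compute $\mathrm{err}(S)=\frac1{|S|}\|Y_S-X_S\hat\beta^S_{\mathrm{OLS}}(X,Y)\|_2^2$, and output $\hat\beta^n_{\mathrm{BFS}}(\mathcal{U}_n):=\hat\beta^{S^*}_{\mathrm{OLS}}(X,Y)$ for the first minimizer $S^*$. Convention: a bound containing a summand with zero denominator is infinite. *)

(* Defs.v *)
From mathcomp Require Import all_boot all_order all_algebra.
From mathcomp Require Import reals constructive_ereal.
Set Implicit Arguments. Unset Strict Implicit. Unset Printing Implicit Defensive.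
Import Order.TTheory GRing.Theory Num.Theory.
Local Open Scope ring_scope.

Section BFS.
Variables (R : realType) (n : nat).
Implicit Types (X Y e o : 'I_n -> R) (S U G : {set 'I_n}).

Definition sqn (v : 'I_n -> R) S : R := \sum_(i in S) v i ^+ 2.
Definition ipr (v w : 'I_n -> R) S : R := \sum_(i in S) v i * w i.

Definition resp X (beta : R) e o : 'I_n -> R := fun i => X i * beta + e i + o i.

(* OLS on S, p = 1: (X_S^T X_S)^+ X_S^T Y_S; for a scalar the Moore-Penrose
   inverse is x^-1 if x <> 0 and 0 otherwise, which is MathComp's x^-1. *)
Definition ols X Y S : R := (sqn X S)^-1 * ipr X Y S.

Definition err X Y S : R := (#|S|%:R)^-1 * \sum_(i in S) (Y i - X i * ols X Y S) ^+ 2.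

(* BFS: enumerate the sets in the fixed order [ord], output OLS on the first
   minimizer of err. *)
Definition bfs X Y (ord : seq {set 'I_n}) : R :=
  ols X Y (nth set0 ord (find (fun S => all (fun T => err X Y S <= err X Y T) ord) ord)).

Definition inlier G S : bool := S :&: G == set0.

Local Open Scope ereal_scope.

Definition eta1 X e S : \bar R :=
  if sqn X S == 0%R then +oo else (`|ipr X e S| / sqn X S)%:E.

Definition eta2_num X e o S U : R :=
  (#|S|%:R / #|U|%:R * sqn e U - sqn e S - 2 * ipr e o S
   + (ipr X e S) ^+ 2 / sqn X S
   + 2 * `|ipr X e S| * `|ipr X o S| / sqn X S
   - #|S|%:R * (ipr X e U) ^+ 2 / (#|U|%:R * sqn X U))%R.

Definition eta2 X e o G S U : \bar R :=
  if [|| sqn X (S :\: G) == 0%R, sqn X S == 0%R, sqn X U == 0%R | #|U| == 0%N]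
  then +oo
  else (Num.sqrt (eta2_num X e o S U / sqn X (S :\: G)))%:E.

Definition bfs_bound X e o G (Un : {set {set 'I_n}}) : \bar R :=
  \big[maxe/-oo]_(S in Un)
     \big[mine/+oo]_(U in Un | inlier G U) (eta1 X e S + eta2 X e o G S U).

End BFS.

(* Main.v *)
Require Import Defs.
From mathcomp Require Import all_boot all_order all_algebra.
From mathcomp Require Import reals constructive_ereal ring lra.
Import Order.TTheory GRing.Theory Num.Theory.
Local Open Scope ring_scope.

Section H.
Variables (R : realType) (n : nat).
Implicit Types (X e o u v : 'I_n -> R) (S U G : {set 'I_n}).

Lemma sum_sq_expand u v (t : R) S :
  \sum_(i in S) (u i - t * v i) ^+ 2 = sqn u S - 2 * t * ipr v u S + t ^+ 2 * sqn v S.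
Proof.
rewrite /sqn /ipr !mulr_sumr -sumrB -big_split /=.
by apply: eq_bigr => i _; ring.
Qed.

Lemma ipr_resp X beta e o S :
  ipr X (resp X beta e o) S = beta * sqn X S + ipr X e S + ipr X o S.
Proof.
rewrite /sqn /ipr /resp mulr_sumr -!big_split /=.
by apply: eq_bigr => i _; ring.
Qed.

Lemma ols_resp X beta e o S : sqn X S != 0 ->
  ols X (resp X beta e o) S = beta + (ipr X e S + ipr X o S) / sqn X S.
Proof.
move=> a0; rewrite /ols ipr_resp; field; exact: a0.
Qed.

Lemma err_resp X beta e o S : sqn X S != 0 ->
  err X (resp X beta e o) S = (#|S|%:R)^-1 *
   (sqn e S + 2 * ipr e o S + sqn o S - (ipr X e S + ipr X o S) ^+ 2 / sqn X S).
Proof.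
move=> a0; rewrite /err ols_resp //; congr (_ * _).
set t := (ipr X e S + ipr X o S) / sqn X S.
have -> : \sum_(i in S) (resp X beta e o i - X i * (beta + t)) ^+ 2
   = \sum_(i in S) ((e i + o i) - t * X i) ^+ 2.
  by apply: eq_bigr => i _; rewrite /resp; congr (_ ^+ 2); ring.
rewrite (sum_sq_expand (fun i => e i + o i)).
have -> : sqn (fun i => e i + o i) S = sqn e S + 2 * ipr e o S + sqn o S.
  rewrite /sqn /ipr mulr_sumr -!big_split /=; apply: eq_bigr => i _; ring.
have -> : ipr X (fun i => e i + o i) S = ipr X e S + ipr X o S.
  rewrite /ipr -!big_split /=; apply: eq_bigr => i _; ring.
rewrite /t; field; exact: a0.
Qed.

Lemma sqn_ge0 v S : 0 <= sqn v S.
Proof. by apply: sumr_ge0 => i _; exact: sqr_ge0. Qed.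

Lemma cs_bound X o G S (t : R) : (forall i, i \notin G -> o i = 0) ->
  t ^+ 2 * sqn X (S :\: G) <= \sum_(i in S) (o i - t * X i) ^+ 2.
Proof.
move=> oG.
rewrite (bigID (fun i => i \in G)) /= -[X in X <= _]add0r.
apply: lerD; first by apply: sumr_ge0 => i _; exact: sqr_ge0.
rewrite /sqn mulr_sumr [leLHS]big_mkcond [leRHS]big_mkcond /=.
rewrite le_eqVlt; apply/orP; left; apply/eqP/eq_bigr => i _; rewrite in_setD.
case: (i \in G) (oG i) => /= [_|-> //]; first by rewrite andbF.
by rewrite andbT; case: (i \in S) => //; rewrite sub0r sqrrN exprMn.
Qed.
Lemma key (a d s u aU E F O EU bU b c : R) : 0 < a -> 0 < d -> 0 < s -> 0 < u -> 0 < aU ->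
  c ^+ 2 * d / a ^+ 2 <= O - c ^+ 2 / a ->
  s^-1 * (E + 2 * F + O - (b + c) ^+ 2 / a) <= u^-1 * (EU + 2 * 0 + 0 - (bU + 0) ^+ 2 / aU) ->
  `|(b + c) / a| <= `|b| / a +
    Num.sqrt ((s / u * EU - E - 2 * F + b ^+ 2 / a + 2 * `|b| * `|c| / a
               - s * bU ^+ 2 / (u * aU)) / d).
Proof.
move=> a0 d0 s0 u0 aU0 hcs herr.
set num := (s / u * EU - E - 2 * F + _ + _ - _).
have herr' : E + 2 * F + O - (b + c) ^+ 2 / a <= s / u * EU - s * bU ^+ 2 / (u * aU).
  have := ler_wpM2l (ltW s0) herr.
  rewrite mulrA mulfV ?gt_eqF // mul1r => h; apply: (le_trans h).
  rewrite le_eqVlt; apply/orP; left; apply/eqP; field.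
  by rewrite !gt_eqF.
have eK : (b + c) ^+ 2 / a = b ^+ 2 / a + 2 * (b * c / a) + c ^+ 2 / a.
  by field; rewrite gt_eqF.
have hM : b * c / a <= `|b| * `|c| / a.
  rewrite ler_pM2r ?invr_gt0 // -normrM; exact: ler_norm.
have e2 : 2 * `|b| * `|c| / a = 2 * (`|b| * `|c| / a) by rewrite !mulrA.
have h1 : c ^+ 2 * d / a ^+ 2 <= num.
  apply: (le_trans hcs); rewrite /num e2; move: herr'; rewrite eK; lra.
have h2 : c ^+ 2 / a ^+ 2 <= num / d.
  have -> : c ^+ 2 / a ^+ 2 = (c ^+ 2 * d / a ^+ 2) / d by field; rewrite !gt_eqF.
  by rewrite ler_pM2r ?invr_gt0.
have h3 : `|c / a| <= Num.sqrt (num / d).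
  rewrite -sqrtr_sqr; apply: ler_wsqrtr; by rewrite expr_div_n.
have hb : `|b / a| = `|b| / a by rewrite normf_div (gtr0_norm a0).
rewrite mulrDl -hb; apply: (le_trans (ler_normD _ _)); exact: lerD.
Qed.
Lemma exmin (T : eqType) (f : T -> R) (s : seq T) : s != [::] ->
  has (fun x => all (fun y => f x <= f y) s) s.
Proof.
elim: s => // x s IH _; case: s IH => [|y s] IH; first by rewrite /= lexx.
have /hasP [z zin zmin] := IH isT.
case: (leP (f x) (f z)) => h.
  apply/hasP; exists x; first exact: mem_head.
  apply/allP => w; rewrite in_cons => /orP [/eqP -> //|win].
  exact: le_trans h (allP zmin w win).
apply/hasP; exists z; first by rewrite in_cons zin orbT.
apply/allP => w; rewrite in_cons => /orP [/eqP -> //|win]; first exact: ltW.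
exact: (allP zmin w win).
Qed.

Lemma inl_zero o G U i : (forall i, i \notin G -> o i = 0) -> inlier G U -> i \in U -> o i = 0.
Proof.
move=> oG /eqP /setP /(_ i); rewrite inE in_set0 => h iU; apply: oG.
by move: h; rewrite iU /= => ->.
Qed.

Lemma sqn_inl o G U : (forall i, i \notin G -> o i = 0) -> inlier G U -> sqn o U = 0.
Proof. move=> oG hU; rewrite /sqn big1 // => i iU; by rewrite (inl_zero _ _ _ _ oG hU iU) expr0n. Qed.

Lemma ipr_inl v o G U : (forall i, i \notin G -> o i = 0) -> inlier G U -> ipr v o U = 0.
Proof. move=> oG hU; rewrite /ipr big1 // => i iU; by rewrite (inl_zero _ _ _ _ oG hU iU) mulr0. Qed.

End H.

Theorem theoremD2 (R : realType) (n : nat) (beta : R) (eps X o : 'I_n -> R)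
  (G : {set 'I_n}) (Un : {set {set 'I_n}}) (ord : seq {set 'I_n}) :
  (forall i, i \notin G -> o i = 0) ->
  set0 \notin Un ->
  (exists2 U, U \in Un & inlier G U) ->
  perm_eq ord (enum Un) ->
  ((`|bfs X (resp X beta eps o) ord - beta|)%:E <= bfs_bound X eps o G Un)%E.
Proof.
move=> oG n0 [U0 U0in U0inl] pord.
have memo : forall S, (S \in ord) = (S \in Un) by move=> S; rewrite (perm_mem pord) mem_enum.
set Y := resp X beta eps o.
set P := fun S => all (fun T => err X Y S <= err X Y T) ord.
have hP : has P ord.
  apply: exmin; apply/negP => /eqP e0; by move: U0in; rewrite -memo e0.
set Ss := nth set0 ord (find P ord).
have SsP : P Ss := nth_find set0 hP.
have SsUn : Ss \in Un by rewrite -memo mem_nth // -has_find.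
have -> : bfs X Y ord = ols X Y Ss by [].
rewrite /bfs_bound (bigD1 Ss) //=.
rewrite le_max; apply/orP; left.
apply: (big_ind (fun x => (_ <= x)%E)); first exact: leey.
  by move=> x y hx hy; rewrite le_min hx hy.
move=> U /andP [UUn Uinl].
rewrite /eta1 /eta2; case: eqP => [_|a0].
  by case: ifP => _ /=; rewrite leey.
case: ifP => [_|]; first by rewrite /= leey.
move/norP => [/eqP d0 /norP [_ /norP [/eqP aU0 u0]]].
rewrite -EFinD lee_fin.
rewrite ols_resp; last by apply/eqP.
rewrite [beta + _]addrC addrK.
have pos : forall (v : 'I_n -> R) (S : {set 'I_n}), sqn v S != 0 -> 0 < sqn v S.
  by move=> v S h; rewrite lt0r h sqn_ge0.
have s0 : (0 : R) < #|Ss|%:R.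
  rewrite ltr0n card_gt0; apply/negP => /eqP e; by move: n0; rewrite -e SsUn.
apply: (@key R _ _ _ _ _ _ _ (sqn o Ss)) => //; try (apply: pos; apply/eqP => //).
  by rewrite ltr0n lt0n.
- have := @cs_bound R n X o G Ss (ipr X o Ss / sqn X Ss) oG.
  rewrite sum_sq_expand => h.
  have e1 : ipr X o Ss ^+ 2 * sqn X (Ss :\: G) / sqn X Ss ^+ 2
      = (ipr X o Ss / sqn X Ss) ^+ 2 * sqn X (Ss :\: G) by field; apply/eqP.
  have e2 : sqn o Ss - ipr X o Ss ^+ 2 / sqn X Ss = sqn o Ss - 2 * (ipr X o Ss / sqn X Ss) * ipr X o Ss +
      (ipr X o Ss / sqn X Ss) ^+ 2 * sqn X Ss by field; apply/eqP.
  by rewrite e1 e2.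
- have := allP SsP U; rewrite memo UUn => /(_ isT).
  rewrite /Y !err_resp; [|by apply/eqP|by apply/eqP].
  by rewrite (sqn_inl _ _ _ _ _ oG Uinl) (ipr_inl _ _ eps _ _ _ oG Uinl) (ipr_inl _ _ X _ _ _ oG Uinl).
Qed.
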